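(* Let $\Gamma=(V,\mathcal E)$ be a $\mathbb Z^d$-periodic graph with fundamental graph $\Gamma_*=(V_*,\mathcal E_* )$, $\nu=\#V_*$. (i) There exists a subgraph $T=(V_T,\mathcal E_T)$ of $\Gamma$ such that $T$ is a tree (connected and without cycles) and $V_T$ consists of $\nu$ vertices of $\Gamma$ which are pairwise not $\mathbb Z^d$-equivalent. (ii) For edge indices defined with respect to the fundamental vertex set $V_0=V_T$ of such a tree, the number $\beta=\sum_{v\in V_*}\beta_v/\varkappa_v$ (where $\beta_v$ is the number of bridges of $\Gamma_*$ starting at $v$) satisfies $$\beta\le 1\ \text{ if } \nu=1,\qquad \beta\le \nu-\sum_{v\in V_*}\frac{1}{\varkappa_v}\ \text{ if }\nu\ge2.$$
   Context: A $\mathbb Z^d$-periodic graph is a connected infinite graph $\Gamma=(V,\mathcal E)$, possibly with loops and multiple edges, on which $\mathbb Z^d$ acts freely by graph automorphisms ($v\mapsto v+m$), with all vertex degrees finite and finite quotient (fundamental) graph $\Gamma_*=\Gamma/\mathbb Z^d=(V_*,\mathcal E_* )$. Each undirected edge is regarded as two oppositely oriented edges; $\mathcal A$ is the set of oriented edges, $\mathcal A_*=\mathcal A/\mathbb Z^d$; the degree $\varkappa_v$ is the number of oriented edges starting at $v$. Given a set $V_0$ of $\nu$ pairwise non-equivalent vertices, each $v\in V$ is uniquely $v=v_0+[v]$ with $v_0\in V_0$, $[v]\in\mathbb Z^d$; the index of an oriented edge $\mathbf e=(u,v)$ is $\tau(\mathbf e)=[v]-[u]\in\mathbb Z^d$,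 which is invariant under the $\mathbb Z^d$-action and so defined on $\mathcal A_*$. A bridge is an oriented edge with nonzero index. *)

(* Defs.v *)
From Stdlib Require Import Relations.Relation_Operators.
From HB Require Import structures.
From mathcomp Require Import all_boot all_order all_algebra.
Set Implicit Arguments. Unset Strict Implicit. Unset Printing Implicit Defensive.
Import Order.TTheory GRing.Theory Num.Theory.

(* A Z^d-periodic graph Gamma is encoded by its quotient data:
   - V : finType     = V_* (vertex orbits; Gamma's vertex set is V * Z^d,
                       with Z^d acting by (v,n)+m = (v,n+m));
   - A : finType     = A_* (orbits of oriented edges);
   - src, tgt : A -> V, shift : A -> Z^d : the orbit a consists of the
     oriented edges  (src a, n) -> (tgt a, n + shift a),  n in Z^d;
   - rev : A -> A    = reversal of orientation (fixed-point-free involution). *)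

Local Open Scope ring_scope.

Definition Zd (d : nat) := 'rV[int]_d.

Definition periodic_data (d : nat) (V A : finType) (src tgt : A -> V)
  (rev : A -> A) (shift : A -> Zd d) : Prop :=
  [/\ involutive rev, (forall a, rev a != a),
      (forall a, src (rev a) = tgt a) & (forall a, shift (rev a) = - shift a)].

Definition gstep (d : nat) (V A : finType) (src tgt : A -> V)
  (shift : A -> Zd d) (x y : V * Zd d) : Prop :=
  exists a, [/\ src a = x.1, tgt a = y.1 & y.2 = x.2 + shift a].

Definition gconnected (d : nat) (V A : finType) (src tgt : A -> V)
  (shift : A -> Zd d) : Prop :=
  forall x y, clos_refl_trans _ (gstep src tgt shift) x y.

(* Index of an oriented edge orbit with respect to the fundamental vertex set
   V_0 = { (v, c v) : v in V }:  tau(a) = [tgt] - [src]. *)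
Definition eindex (d : nat) (V A : finType) (src tgt : A -> V)
  (shift : A -> Zd d) (c : V -> Zd d) (a : A) : Zd d :=
  shift a + c (src a) - c (tgt a).

(* The subgraph of Gamma with vertex set V_T = {(v, c v)} and edge set given by
   F : {set A}; a in F stands for the oriented edge (src a, c (src a)) ->
   (tgt a, c (src a) + shift a) of Gamma. *)
Definition subgraph_of (d : nat) (V A : finType) (src tgt : A -> V)
  (rev : A -> A) (shift : A -> Zd d) (c : V -> Zd d) (F : {set A}) : Prop :=
  (forall a, a \in F -> eindex src tgt shift c a = 0) /\
  (forall a, a \in F -> rev a \in F).

Definition sub_connected (V A : finType) (src tgt : A -> V) (F : {set A}) : Prop :=
  forall u v : V,
    clos_refl_trans _ (fun x y => exists2 a, a \in F & src a = x /\ tgt a = y) u v.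

Definition is_cycle (V A : finType) (src tgt : A -> V) (rev : A -> A)
  (F : {set A}) (s : seq A) : Prop :=
  [/\ s != [::], all (mem F) s,
      cycle (fun a b => tgt a == src b) s,
      uniq (map src s) & (forall a b, a \in s -> b \in s -> b != rev a)].

Definition sub_tree (d : nat) (V A : finType) (src tgt : A -> V)
  (rev : A -> A) (shift : A -> Zd d) (c : V -> Zd d) (F : {set A}) : Prop :=
  [/\ subgraph_of src tgt rev shift c F, sub_connected src tgt F &
      (forall s, ~ is_cycle src tgt rev F s)].

Definition kappa (V A : finType) (src : A -> V) (v : V) : nat :=
  #|[set a | src a == v]|.

Definition nbridges (d : nat) (V A : finType) (src tgt : A -> V)
  (shift : A -> Zd d) (c : V -> Zd d) (v : V) : nat :=
  #|[set a | (src a == v) && (eindex src tgt shift c a != 0)]|.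

Definition beta (d : nat) (V A : finType) (src tgt : A -> V)
  (shift : A -> Zd d) (c : V -> Zd d) : rat :=
  \sum_(v : V) (nbridges src tgt shift c v)%:R / (kappa src v)%:R.

(* Main.v *)
Require Import Defs.
From Stdlib Require Import Relations.Relation_Operators Relations.Operators_Properties.
From HB Require Import structures.
From mathcomp Require Import all_boot all_order all_algebra.
From mathcomp Require Import lra.
Import Order.TTheory GRing.Theory Num.Theory.
Local Open Scope ring_scope.

Definition fstep (V A : finType) (src tgt : A -> V) (F : {set A}) := fun x y => exists2 a, a \in F & src a = x /\ tgt a = y.
Arguments fstep {V A} src tgt F.

Definition tinv (d : nat) (V A : finType) (src tgt : A -> V) (rev : A -> A) (shift : A -> Zd d) (S : {set V}) (c : V -> Zd d) (F : {set A}) : Prop :=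
  [/\ forall a, a \in F -> src a \in S /\ tgt a \in S,
      subgraph_of src tgt rev shift c F,
      forall u v, u \in S -> v \in S -> clos_refl_trans _ (fstep src tgt F) u v &
      forall s, ~ is_cycle src tgt rev F s].
Arguments tinv {d V A} src tgt rev shift S c F.

Lemma crossing (d : nat) (V A : finType) (src tgt : A -> V) (rev : A -> A) (shift : A -> Zd d) (hcon : gconnected src tgt shift) (S : {set V}) u w : u \in S -> w \notin S ->
  exists a, src a \in S /\ tgt a \notin S.
Proof.
move=> uS wS.
suff H : forall x y, clos_refl_trans _ (gstep src tgt shift) x y ->
  x.1 \in S -> y.1 \notin S -> exists a, src a \in S /\ tgt a \notin S.
  exact: (H (u, 0) (w, 0) (hcon _ _)).
move=> x y; elim => [p q [a [sa ta _]]|p|p q r _ IH1 _ IH2] pS rS.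
- by exists a; rewrite sa ta.
- by rewrite pS in rS.
- case: (boolP (q.1 \in S)) => qS; [exact: IH2|exact: IH1].
Qed.

Lemma grow (d : nat) (V A : finType) (src tgt : A -> V) (rev : A -> A) (shift : A -> Zd d) (hpd : periodic_data src tgt rev shift) (hcon : gconnected src tgt shift) k : (k < #|V|)%N -> exists S c F, tinv src tgt rev shift S c F /\ #|S| = k.+1.
Proof.
elim: k => [|k IH] hk.
  have [r _] : exists r : V, r \in predT by apply/card_gt0P.
  exists [set r], (fun _ => 0), set0; split; last by rewrite cards1.
  split.
  - by move=> a; rewrite in_set0.
  - by split=> a; rewrite in_set0.
  - by move=> u v; rewrite !inE => /eqP -> /eqP ->; apply: rt_refl.
  - by case=> [|a s] [] //=; rewrite inE.
have [S [c [F [[hFS [hF0 hFr] hreach hcyc] hS]]]] := IH (ltnW hk).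
have [u uS] : exists u, u \in S by apply/card_gt0P; rewrite hS.
have [w wS] : exists w, w \notin S.
  apply/existsP; rewrite -negb_forall; apply/negP => /forallP hall.
  have : S = setT by apply/setP => x; rewrite inE hall.
  by move=> ST; move: hk; rewrite -hS ST cardsT ltnn.
have [a [saS taS]] := @crossing d V A src tgt rev shift hcon S u w uS wS.
case: hpd => revK revN srev shrev.
have trev : tgt (rev a) = src a by rewrite -srev revK.
set c' := fun v => if v == (tgt a) then c (src a) + shift a else c v.
set F' := a |: (rev a |: F).
have hwsrc : src a != (tgt a) by apply/eqP => e; move: taS; rewrite -e saS.
have hc'S x : x \in S -> c' x = c x.
  by move=> xS; rewrite /c' ifN //; apply/eqP => e; move: taS; rewrite -e xS.
exists ((tgt a) |: S), c', F'; split; last by rewrite cardsU1 taS hS.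
split.
- move=> b; rewrite !inE => /or3P [/eqP ->|/eqP ->|/hFS [-> ->]].
  + by rewrite saS eqxx orbT.
  + by rewrite srev trev eqxx saS orbT.
  + by rewrite !orbT.
- split.
  + move=> b; rewrite !inE => /or3P [/eqP ->|/eqP ->|bF].
    * rewrite /eindex /c' ifN // eqxx.
      by apply/eqP; rewrite subr_eq0 addrC.
    * rewrite /eindex srev trev /c' eqxx ifN // shrev.
      by rewrite addrCA addNr addr0 subrr.
    * have [sb tb] := hFS _ bF.
      by move: (hF0 _ bF); rewrite /eindex !hc'S.
  + move=> b; rewrite !inE => /or3P [/eqP ->|/eqP ->|bF].
    * by rewrite eqxx orbT.
    * by rewrite revK eqxx.
    * by rewrite hFr ?orbT.
- have mono x y : clos_refl_trans _ (fstep src tgt F) x y -> clos_refl_trans _ (fstep src tgt F') x y.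
    elim=> [p q [b bF hb]|p|p q r _ IH1 _ IH2].
    + by apply: rt_step; exists b => //; rewrite !inE bF !orbT.
    + exact: rt_refl.
    + exact: rt_trans IH1 IH2.
  have to_w x : x \in S -> clos_refl_trans _ (fstep src tgt F') x (tgt a).
    move=> xS; apply: rt_trans (mono _ _ (hreach _ _ xS saS)) _.
    by apply: rt_step; exists a; rewrite ?inE ?eqxx.
  have from_w x : x \in S -> clos_refl_trans _ (fstep src tgt F') (tgt a) x.
    move=> xS; apply: rt_trans _ (mono _ _ (hreach _ _ saS xS)).
    by apply: rt_step; exists (rev a); rewrite ?inE ?eqxx ?orbT.
  move=> x y; rewrite !inE => /orP[/eqP ->|xS] /orP[/eqP ->|yS].
  + exact: rt_refl.
  + exact: from_w.
  + exact: to_w.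
  + exact: mono (hreach _ _ xS yS).
- move=> s [sn0 /allP sF scyc suniq srevs].
  have noF b : b \in F -> src b != (tgt a) /\ tgt b != (tgt a).
    move=> bF; have [sb tb] := hFS _ bF.
    by split; apply: contraNneq taS => <-.
  case: (boolP (a \in s)) => [aS|aS].
    have := next_cycle scyc aS; set b := next s a => /eqP hb.
    have bs : b \in s by rewrite mem_next.
    move: (sF _ bs); rewrite !inE => /or3P [/eqP ba|/eqP bra|bF].
    * by move: hb; rewrite ba => /eqP; rewrite eq_sym (negbTE hwsrc).
    * by move: (srevs _ _ aS bs); rewrite bra eqxx.
    * by have [+ _] := noF _ bF; rewrite -hb eqxx.
  case: (boolP (rev a \in s)) => [raS|raS].
    have := prev_cycle scyc raS; set b := prev s (rev a) => /eqP hb.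
    have bs : b \in s by rewrite mem_prev.
    move: (sF _ bs); rewrite !inE => /or3P [/eqP ba|/eqP bra|bF].
    * by move: aS; rewrite -ba bs.
    * by move: hb; rewrite bra srev trev => /eqP; rewrite (negbTE hwsrc).
    * by have [_ +] := noF _ bF; rewrite hb srev eqxx.
  apply: (hcyc s); split => //; apply/allP => b bs.
  move: (sF _ bs); rewrite !inE => /or3P [/eqP ba|/eqP bra|//].
  + by move: aS; rewrite -ba bs.
  + by move: raS; rewrite -bra bs.
Qed.

Lemma part2 (d : nat) (V A : finType) (src tgt : A -> V)
  (rev : A -> A) (shift : A -> Zd d) (c : V -> Zd d) (F : {set A}) :
  (0 < #|V|)%N -> sub_tree src tgt rev shift c F ->
     if #|V| == 1%N then beta src tgt shift c <= 1
     else beta src tgt shift c <= #|V|%:R - \sum_(v : V) 1 / (kappa src v)%:R.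
Proof.
move=> h0; case=> [[hF0 _] hcon _].
have hsub v : [set a | (src a == v) && (eindex src tgt shift c a != 0)]
   \subset [set a | src a == v].
  by apply/subsetP => a; rewrite !inE => /andP[].
case: ifP => hV.
  rewrite /beta.
  apply: (le_trans (y := \sum_(v : V) (1 : rat))); last first.
    by rewrite sumr_const (eqP hV).
  apply: ler_sum => v _.
  have := subset_leq_card (hsub v); rewrite -/(kappa src v) -/(nbridges src tgt shift c v).
  case: (kappa src v) => [|k] hk.
    by rewrite leqn0 in hk; rewrite (eqP hk) mul0r.
  by rewrite ler_pdivrMr ?ltr0Sn // mul1r ler_nat.
have hV2 : (1 < #|V|)%N.
  by move: h0 hV; case: #|V| => [|[|n]].
rewrite /beta.
apply: (le_trans (y := \sum_(v : V) (1 - 1 / (kappa src v)%:R))); last first.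
  by rewrite sumrB sumr_const.
apply: ler_sum => v _.
have [a aF av] : exists2 a, a \in F & src a = v.
  move/card_gt1P: hV2 => [x [y [_ _ xy]]].
  have [u uv] : exists u, u != v.
    case: (eqVneq x v) => [xv|]; last by exists x.
    by exists y; rewrite -xv eq_sym.
  have := hcon v u; move/clos_rt_rt1n_iff => h.
  case: h uv => [|? z [a aF [sa ta]] _] uv; first by rewrite eqxx in uv.
  by exists a.
have hp : [set a | (src a == v) && (eindex src tgt shift c a != 0)]
   \proper [set a | src a == v].
  apply/properP; split => //; exists a; rewrite !inE av eqxx //=.
  by rewrite hF0 // eqxx.
have := proper_card hp; rewrite -/(kappa src v) -/(nbridges src tgt shift c v).
case: (kappa src v) => [|k] hk //.
have hk' : ((nbridges src tgt shift c v).+1%:R : rat) <= k.+1%:R by rewrite ler_nat.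
rewrite -natr1 in hk'.
have kpos : (0 : rat) < k.+1%:R by rewrite ltr0Sn.
rewrite ler_pdivrMr // mulrBl.
rewrite mul1r mulVf ?gt_eqF //; lra.
Qed.

Theorem lemma3p1 (d : nat) (V A : finType) (src tgt : A -> V)
  (rev : A -> A) (shift : A -> Zd d) :
  (0 < d)%N -> (0 < #|V|)%N ->
  periodic_data src tgt rev shift ->
  gconnected src tgt shift ->
  (exists (c : V -> Zd d) (F : {set A}), sub_tree src tgt rev shift c F) /\
  (forall (c : V -> Zd d) (F : {set A}), sub_tree src tgt rev shift c F ->
     if #|V| == 1%N then beta src tgt shift c <= 1
     else beta src tgt shift c <= #|V|%:R - \sum_(v : V) 1 / (kappa src v)%:R).
Proof.
move=> _ h0 hpd hcon; split; last by move=> c F; exact: part2.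
have hk : (#|V|.-1 < #|V|)%N by case: #|V| h0.
have [S [c [F [[hFS hsub hreach hcyc] hS]]]] := @grow d V A src tgt rev shift hpd hcon _ hk.
exists c, F; split => // u v.
have ST : S = setT by apply/eqP; rewrite eqEcard subsetT cardsT hS prednK //=.
by apply: hreach; rewrite ST inE.
Qed.
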